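(* Let $d_1,\dots,d_n\in\mathbb N$ and $M'_{(d_i)}=\{\mathbf m\in M_{(d_i);(d_j)}: m_{i,j}=0 \text{ for all } j<i-1\}$. (1) $M'_{(d_i)}$ is a lower ideal of the poset $(M_{(d_i);(d_j)},\le)$. (2) If $\mathbf m\in M'_{(d_i)}$, then $m_{\le i,\ge j}=d_j+d_{j+1}+\dots+d_i$ for all $i\ge j$. (3) For $\mathbf m,\mathbf m'\in M'_{(d_i)}$, $\mathbf m\le\mathbf m'$ if and only if $m_{\le i,\ge j}\le m'_{\le i,\ge j}$ for all $i<j$. (4) If $\mathbf m\in M'_{(d_i)}$, then $m_{i,i-1}=m_{\le i-1,\ge i}$ for all $i\in[2,n]$. (5) The map $\Phi$ sending a multisegment to its matrix is a bijection from $M_{(d_i)}$ onto $M'_{(d_i)}$.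
   Context: All indices range over $[1,n]$. $M_{(d_i);(d_j)}$ is the set of $n\times n$ matrices with entries in $\mathbb N$ whose $i$-th row sum and $i$-th column sum both equal $d_i$. Partial sums: $m_{\le i,\ge j}=\sum_{i'\le i,\,j'\ge j}m_{i',j'}$. Partial order: partition $[1,d]$ ($d=\sum d_i$) into consecutive intervals $B_1<\dots<B_n$ with $|B_i|=d_i$, let $S_{(d_i)}\subseteq S_d$ be the subgroup preserving each $B_i$; the map $\psi(w)_{i,j}=|w(B_i)\cap B_j|$ induces a bijection $S_{(d_i)}\backslash S_d/S_{(d_i)}\to M_{(d_i);(d_j)}$; let $w_{\mathbf m}$ be the longest element of the double coset of $\mathbf m$, and set $\mathbf m\le\mathbf m'$ iff $w_{\mathbf m}\le w_{\mathbf m'}$ in Bruhat order of $S_d$ (generated by adjacent transpositions). A segment is an integer interval $[i,j]$, $i\le j$; $M_{(d_i)}$ is the set of multisegments (finite formal sums of segments) in which each $i\in[1,n]$ occurs exactly $d_i$ times as an element of a segment (and no integer outside $[1,n]$ occurs). $\Phi(\mathbf m)$ is the $n\times n$ matrix with entry at $(i,j)$: the multiplicity of $[i,j]$ in $\mathbf m$ if $i\le j$; the number of segments $[k,l]$ of $\mathbf m$ (with multiplicity) with $k\le j$ and $l\ge i$ if $j=i-1$; and $0$ if $j<i-1$. *)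

(* Defs.v *)
(* Indices [1,n] are rendered 0-based as 'I_n. *)
From Stdlib Require Import Relations.
From mathcomp Require Import all_boot all_fingroup all_algebra.
Set Implicit Arguments. Unset Strict Implicit. Unset Printing Implicit Defensive.

Section Defs.
Variables (n : nat) (d : 'I_n -> nat).

Definition Dsum : nat := \sum_(i < n) d i.

Definition inB (i : 'I_n) (k : nat) : bool :=
  (\sum_(i' < n | (i' < i)%N) d i' <= k) && (k < \sum_(i' < n | (i' <= i)%N) d i').

Definition nmat := 'M[nat]_n.

Definition inMd (m : nmat) : Prop :=
  forall i : 'I_n, \sum_(j < n) m i j = d i /\ \sum_(j < n) m j i = d i.

Definition inM' (m : nmat) : Prop :=
  inMd m /\ forall i j : 'I_n, (j.+1 < i)%N -> m i j = 0.

Definition psum (m : nmat) (i j : 'I_n) : nat :=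
  \sum_(i' < n | (i' <= i)%N) \sum_(j' < n | (j <= j')%N) m i' j'.

Definition psi (w : {perm 'I_Dsum}) : nmat :=
  (\matrix_(i, j) #|[set k : 'I_Dsum | inB i k && inB j (w k)]|)%R.

(* Coxeter length w.r.t. adjacent transpositions = number of inversions *)
Definition perm_length (N : nat) (w : {perm 'I_N}) : nat :=
  #|[set p : 'I_N * 'I_N | (p.1 < p.2)%N && (w p.2 < w p.1)%N]|.

Definition bruhat_step (N : nat) (u v : {perm 'I_N}) : Prop :=
  exists a b : 'I_N, a != b /\ v = (u * tperm a b)%g /\
                     (perm_length u < perm_length v)%N.

Definition bruhat (N : nat) : relation {perm 'I_N} :=
  clos_refl_trans _ (@bruhat_step N).

(* w is the longest element of the double coset corresponding to m
   (the double coset of m is the fiber psi^{-1}(m)) *)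
Definition longest_of (m : nmat) (w : {perm 'I_Dsum}) : Prop :=
  psi w = m /\ forall v : {perm 'I_Dsum}, psi v = m -> (perm_length v <= perm_length w)%N.

Definition leM (m m' : nmat) : Prop :=
  exists w w' : {perm 'I_Dsum}, longest_of m w /\ longest_of m' w' /\ bruhat w w'.

Definition seg : predArgType := {p : 'I_n * 'I_n | (p.1 <= p.2)%N}.

(* multisegments: finite formal sums of segments = multiplicity functions *)
Definition mseg := {ffun seg -> nat}.

Definition inMseg (x : mseg) : Prop :=
  forall k : 'I_n,
    \sum_(s : seg | ((val s).1 <= k)%N && (k <= (val s).2)%N) x s = d k.

Definition Phi (x : mseg) : nmat :=
  (\matrix_(i, j)
    if (i <= j)%N then \sum_(s : seg | ((val s).1 == i) && ((val s).2 == j)) x s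
    else if j.+1 == i then
      \sum_(s : seg | ((val s).1 <= j)%N && (i <= (val s).2)%N) x s
    else 0)%R.

End Defs.

(* Main.v *)
Require Import Defs.
From mathcomp Require Import all_boot all_fingroup all_algebra.
From mathcomp Require Import zify.
From Stdlib Require Import Relations.
Set Implicit Arguments. Unset Strict Implicit. Unset Printing Implicit Defensive.
Open Scope nat_scope.

Lemma sumb_le (F : nat -> bool) a b : \sum_(a <= k < b) F k <= b - a.
Proof.
apply: (@leq_trans (\sum_(a <= k < b) 1)); first by apply: leq_sum => k _; exact: leq_b1.
by rewrite sum_nat_const_nat muln1.
Qed.

Lemma sumb_true (F : nat -> bool) a b : (forall k, a <= k < b -> F k) ->
  \sum_(a <= k < b) F k = b - a.
Proof.
move=> h; rewrite (eq_big_nat _ _ (F2 := fun _ => 1)); first by rewrite sum_nat_const_nat muln1.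
by move=> k /h ->.
Qed.

Lemma sumb_false (F : nat -> bool) a b : (forall k, a <= k < b -> F k = false) ->
  \sum_(a <= k < b) F k = 0.
Proof.
move=> h; rewrite (eq_big_nat _ _ (F2 := fun _ => 0)); first by rewrite sum_nat_const_nat muln0.
by move=> k /h ->.
Qed.

Lemma sumA1 (F : nat -> bool) x0 x1 x :
  (forall a b, x0 <= a -> a < b -> b < x1 -> F a = false -> F b = false) ->
  x0 <= x -> x <= x1 ->
  \sum_(x0 <= k < x) F k = minn (x - x0) (\sum_(x0 <= k < x1) F k).
Proof.
move=> hF h0 h1; rewrite (big_cat_nat h0 h1) /=.
case Hall: (all F (index_iota x0 x)).
  have e : \sum_(x0 <= k < x) F k = x - x0.
    by apply: sumb_true => k hk; move/allP: Hall; apply; rewrite mem_index_iota.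
  rewrite e; lia.
move/negbT/allPn: Hall => [a]; rewrite mem_index_iota => /andP [xa ax] /negbTE Fa.
rewrite (@sumb_false F x x1) ?addn0.
  by have := sumb_le F x0 x; lia.
move=> k /andP [xk kx1]; apply: (hF a) => //; lia.
Qed.

Lemma sumA2 (F : nat -> bool) x0 x1 x :
  (forall a b, x0 <= a -> a < b -> b < x1 -> F a -> F b) ->
  x0 <= x -> x <= x1 ->
  \sum_(x <= k < x1) F k = minn (x1 - x) (\sum_(x0 <= k < x1) F k).
Proof.
move=> hF h0 h1; rewrite (big_cat_nat h0 h1) /=.
case Hall: (all F (index_iota x x1)).
  have e : \sum_(x <= k < x1) F k = x1 - x.
    by apply: sumb_true => k hk; move/allP: Hall; apply; rewrite mem_index_iota.
  rewrite e; lia.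
move/negbT/allPn: Hall => [a]; rewrite mem_index_iota => /andP [xa ax] /negbTE Fa.
rewrite (@sumb_false F x0 x) ?add0n.
  by have := sumb_le F x x1; lia.
move=> k /andP [xk kx1]; apply/negbTE/negP => Fk.
by move: (hF k a xk (leq_trans kx1 xa) ax Fk); rewrite Fa.
Qed.

Section PermLemmas.
Variable N : nat.
Implicit Types (u v w : {perm 'I_N}).

Definition rk w (P Q : nat) : nat := \sum_(k < N) ((k < P) && (Q <= w k)).

Lemma tpermM_conj w (p q : 'I_N) : (tperm p q * w)%g = (w * tperm (w p) (w q))%g.
Proof. rewrite -tpermJ /conjg. by rewrite !mulgA mulgV mul1g. Qed.

Lemma rk_tperm w (p q : 'I_N) P Q : p < q ->
  rk (tperm p q * w) P Q + ((p < P <= q) && (Q <= w p)) =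
  rk w P Q + ((p < P <= q) && (Q <= w q)).
Proof.
move=> pq; rewrite /rk.
under eq_bigr do rewrite permM.
rewrite (reindex_inj (@perm_inj _ (tperm p q))) /=.
under eq_bigr do rewrite tpermK.
have qp : q != p by rewrite neq_ltn pq orbT.
rewrite (bigD1 p) // (bigD1 q) //= [in RHS](bigD1 p) // [in RHS](bigD1 q) //=.
rewrite tpermL tpermR.
set S1 := \sum_(i < N | _) _.
set S2 := \sum_(i < N | _) _.
have -> : S1 = S2.
  apply: eq_bigr => k /andP [kp kq]; rewrite tpermD // eq_sym //.
case: (ltnP p P) => pP; case: (ltnP q P) => qP /=;
  case: (Q <= w p); case: (Q <= w q) => /=; lia.
Qed.


Definition invs w := [set pr : 'I_N * 'I_N | (pr.1 < pr.2) && (w pr.2 < w pr.1)].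

Lemma length_tperm w (p q : 'I_N) : p < q -> w p < w q ->
  perm_length w < perm_length (tperm p q * w).
Proof.
move=> pq wpq.
rewrite /perm_length -/(invs w) -/(invs (tperm p q * w)).
pose f (pr : 'I_N * 'I_N) := if tperm p q pr.1 < tperm p q pr.2
  then (tperm p q pr.1, tperm p q pr.2) else pr.
have finj : {in invs w &, injective f}.
  move=> [x y] [x' y']; rewrite !inE /= => /andP [xy _] /andP [xy' _].
  rewrite /f /=; case: ifP => h1; case: ifP => h2 //.
  - by case=> /perm_inj -> /perm_inj ->.
  - by case=> e1 e2; move: h2; rewrite -e1 -e2 !tpermK xy.
  - by case=> e1 e2; move: h1; rewrite e1 e2 !tpermK xy'.
have fsub : f @: invs w \subset invs (tperm p q * w) :\ (p, q).
  apply/subsetP => z /imsetP [[x y]]; rewrite inE /= => /andP [xy wxy] ->.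
  rewrite /f /=; case: ifP => h.
  - rewrite !inE /= !permM !tpermK h wxy; apply/andP; split => //.
    apply/eqP; case=> e1 e2; move: xy; rewrite -(tpermK p q x) -(tpermK p q y) e1 e2.
    rewrite tpermL tpermR; lia.
  - rewrite !inE /= !permM xy /=.
    apply/andP; split.
      apply/eqP; case=> e1 e2; subst; lia.
    move: h; case: (tpermP p q x) => [ex|ex|nx1 nx2]; case: (tpermP p q y) => [ey|ey|ny1 ny2];
      subst => //= h; lia.
have := subset_leq_card fsub.
rewrite card_in_imset // [X in _ -> _ < X](cardsD1 (p, q)).
have -> : (p, q) \in invs (tperm p q * w) by rewrite inE /= !permM tpermL tpermR pq wpq.
by [].
Qed.


Lemma tperm_invol (p q : 'I_N) w : (tperm p q * (tperm p q * w))%g = w.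
Proof. by rewrite mulgA tperm2 mul1g. Qed.

Lemma rk_step u v : bruhat_step u v -> forall P Q, rk u P Q <= rk v P Q.
Proof.
case=> [x [y [xy [-> ltl]]]] P Q.
have key : forall p q : 'I_N, p < q -> perm_length u < perm_length (tperm p q * u) ->
    rk u P Q <= rk (tperm p q * u) P Q.
  move=> p q pq hl.
  have upq : u p < u q.
    rewrite ltn_neqAle; apply/andP; split.
      by apply/negP => /eqP /val_inj /perm_inj e; move: pq; rewrite e ltnn.
    rewrite leqNgt; apply/negP => uqp.
    have := length_tperm (w := tperm p q * u) pq.
    rewrite !permM tpermL tpermR tperm_invol => /(_ uqp) h.
    by move: hl; rewrite ltnNge (ltnW h).
  have := rk_tperm u P Q pq.
  case: (p < P <= q) => /=; last by rewrite !addn0 => ->.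
  case: (leqP Q (u p)) => h1; case: (leqP Q (u q)) => h2 /=; lia.
have e : (u * tperm x y)%g = (tperm ((u^-1)%g x) ((u^-1)%g y) * u)%g.
  by rewrite tpermM_conj !permKV.
have nxy : (u^-1)%g x != (u^-1)%g y by apply: contra xy => /eqP /perm_inj ->.
move: ltl; rewrite e.
case: (ltngtP ((u^-1)%g x) ((u^-1)%g y)) => h.
- exact: key.
- by rewrite tpermC; apply: key.
- by move/val_inj: h => h; rewrite h eqxx in nxy.
Qed.

Lemma rk_bruhat u v : bruhat u v -> forall P Q, rk u P Q <= rk v P Q.
Proof.
elim=> [x y /rk_step //| x P Q // | x y z _ IH1 _ IH2 P Q].
exact: leq_trans (IH1 P Q) (IH2 P Q).
Qed.


Lemma rk_succ w (a : 'I_N) Q : rk w a.+1 Q = rk w a Q + (Q <= w a).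
Proof.
rewrite /rk (bigD1 a) //= [in RHS](bigD1 a) //= ltnSn ltnn /= addnAC; congr (_ + _).
apply: eq_bigr => k ka; rewrite ltnS leq_eqVlt.
by have -> : (val k == val a) = false by apply/negbTE; exact: ka.
Qed.

Lemma rk_agree u v P Q : (forall k : 'I_N, k < P -> u k = v k) -> rk u P Q = rk v P Q.
Proof.
move=> h; apply: eq_bigr => k _; case: (ltnP k P) => //= kP; by rewrite h.
Qed.

Lemma rk_split w P Q Q' : Q <= Q' ->
  rk w P Q = rk w P Q' + \sum_(k < N) ((k < P) && (Q <= w k < Q')).
Proof.
move=> QQ; rewrite /rk -big_split; apply: eq_bigr => k _ /=.
case: (k < P) => //=; case: (leqP Q' (w k)) => h1; case: (leqP Q (w k)) => h2 //=; lia.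
Qed.

Lemma rk_le_N w P Q : N <= Q -> rk w P Q = 0.
Proof.
move=> h; apply: big1 => k _.
have : w k < Q := leq_trans (ltn_ord _) h.
by rewrite ltnNge => /negbTE ->; rewrite andbF.
Qed.

Lemma rk0 w Q : rk w 0 Q = 0.
Proof. by apply: big1 => k _. Qed.

Definition Sg w := \sum_(P < N.+1) \sum_(Q < N.+1) rk w P Q.

Definition rkle u v := forall P Q, P <= N -> Q <= N -> rk u P Q <= rk v P Q.

Lemma sum_lt (I : finType) (i0 : I) (F G : I -> nat) :
  (forall i, F i <= G i) -> F i0 < G i0 -> \sum_i F i < \sum_i G i.
Proof.
move=> h h0; rewrite (bigD1 i0) // [X in _ < X](bigD1 i0) //.
apply: (@leq_trans (G i0 + \sum_(i | i != i0) F i)); first by rewrite ltn_add2r.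
by rewrite leq_add2l; apply: leq_sum => i _.
Qed.

Lemma bruhat_next u v : u != v -> rkle u v ->
  exists u', [/\ bruhat_step u u', rkle u' v & Sg u < Sg u'].
Proof.
move=> uv hle.
have [a0 ha0] : exists a0 : 'I_N, u a0 != v a0.
  apply/existsP; apply: contraR uv; rewrite negb_exists => /forallP h.
  by apply/eqP/permP => k; move: (h k); rewrite negbK => /eqP.
case: (@arg_minnP _ a0 (fun k : 'I_N => u k != v k) (fun k : 'I_N => val k) ha0) => a ha amin.
have agr : forall k : 'I_N, k < a -> u k = v k.
  move=> k ka; apply/eqP; apply: contraLR ka => h; rewrite -leqNgt; exact: amin.
have uva : u a < v a.
  have h := hle a.+1 (u a) (ltn_ord a) (ltnW (ltn_ord _)).
  rewrite !rk_succ (rk_agree _ agr) leqnn in h.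
  rewrite ltn_neqAle; apply/andP; split; last by move: h; case: (u a <= v a) => //=; lia.
  by apply: contra ha => /eqP /val_inj ->.
pose c0 := ((u^-1)%g (v a)).
have uc0 : u c0 = v a by rewrite /c0 permKV.
have ac0 : a < c0.
  case: (ltngtP a c0) => // h.
    have := agr _ h; rewrite uc0 => /perm_inj e; by move: h; rewrite e ltnn.
  have e : c0 = a by apply: val_inj; exact: (esym h).
  by move: uva; rewrite -uc0 e ltnn.
have hc0 : (a < c0) && (u a < u c0 <= v a) by rewrite ac0 uc0 uva leqnn.
case: (@arg_minnP _ c0 (fun k : 'I_N => (a < k) && (u a < u k <= v a)) (fun k : 'I_N => val k) hc0) => c /and3P [ac uac ucv] cmin.
pose u' := (tperm a c * u)%g.
have hrk := fun P Q => rk_tperm u P Q ac.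
exists u'; split.
- exists (u a), (u c); split.
    by apply/negP => /eqP /perm_inj e; move: ac; rewrite e ltnn.
  split; first by rewrite /u' tpermM_conj.
  exact: length_tperm ac uac.
- move=> P Q PN QN.
  have := hrk P Q.
  case hP : (a < P <= c) => /=; last by rewrite !addn0 => ->; exact: hle.
  case: (leqP Q (u a)) => h1.
    by rewrite (leq_trans h1 (ltnW uac)) => /addIn ->; exact: hle.
  case: (leqP Q (u c)) => h2; last by rewrite !addn0 => ->; exact: hle.
  rewrite addn0 => ->; rewrite addn1.
  have va1 : v a < N by [].
  rewrite (rk_split u P (ltnW (leq_ltn_trans h2 (leq_ltn_trans ucv (ltnSn _))))).
  rewrite (rk_split v P (ltnW (leq_ltn_trans h2 (leq_ltn_trans ucv (ltnSn _))))).
  have e1 : \sum_(k < N) ((k < P) && (Q <= u k < (v a).+1)) =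
            \sum_(k < N) ((k < a) && (Q <= u k < (v a).+1)).
    apply: eq_bigr => k _.
    case: (ltnP k a) => ka.
      by move/andP: hP => [aP _]; rewrite (ltn_trans ka aP).
    case: (ltnP k P) => //= kP.
    suff : ~~ (Q <= u k < (v a).+1) by move/negbTE ->.
    apply/negP => /andP [Qk kva].
    case: (ltngtP a k) => ak.
    + have ck : c <= k.
        by apply: cmin; rewrite ak /= (leq_trans h1 Qk) /= -ltnS kva.
      by move/andP: hP => [_ Pc]; move: (leq_trans kP Pc); rewrite ltnNge ck.
    + by move: ka; rewrite leqNgt ak.
    + by move/val_inj: ak => ak; move: Qk; rewrite -ak leqNgt h1.
  have e2 : \sum_(k < N) ((k < a) && (Q <= u k < (v a).+1)) + 1 <=
            \sum_(k < N) ((k < P) && (Q <= v k < (v a).+1)).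
    rewrite (bigD1 a) //= [X in _ <= X](bigD1 a) //= ltnn /= add0n.
    move/andP: hP => [aP _]; rewrite aP (leq_trans h2 ucv) ltnSn /= addnC leq_add2l.
    apply: leq_sum => k _; case: (ltnP k a) => ka //=.
    by rewrite (agr _ ka) (ltn_trans ka aP).
  rewrite e1; have := hle P (v a).+1 PN va1; lia.
- rewrite /u'.
  have pw : forall P Q, rk u P Q <= rk (tperm a c * u) P Q.
    move=> P Q; have := hrk P Q; case: (a < P <= c) => /=; last by rewrite !addn0 => ->.
    case: (leqP Q (u a)) => h1; case: (leqP Q (u c)) => h2 /=; lia.
  have st : rk u a.+1 (u c) < rk (tperm a c * u) a.+1 (u c).
    have := hrk a.+1 (u c); rewrite ltnSn ac leqnn leqNgt uac /=; lia.
  have Pa : a.+1 < N.+1 by rewrite ltnS.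
  have Qc : u c < N.+1 by exact: leqW (ltn_ord (u c)).
  rewrite /Sg; apply: (@sum_lt _ (Ordinal Pa) (fun P : 'I_N.+1 => \sum_(Q < N.+1) rk u P Q)
     (fun P : 'I_N.+1 => \sum_(Q < N.+1) rk (tperm a c * u) P Q)) => [P|].
    by apply: leq_sum => Q _; exact: pw.
  exact: (@sum_lt _ (Ordinal Qc) (fun Q : 'I_N.+1 => rk u a.+1 Q)
     (fun Q : 'I_N.+1 => rk (tperm a c * u) a.+1 Q)).
Qed.


Lemma Sg_le u v : rkle u v -> Sg u <= Sg v.
Proof.
move=> h; apply: leq_sum => P _; apply: leq_sum => Q _; apply: h.
  by rewrite -ltnS. by rewrite -ltnS.
Qed.

Lemma bruhat_of_rkle u v : rkle u v -> bruhat u v.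
Proof.
move=> h; move: (leqnn (Sg v - Sg u)); move: {2}(Sg v - Sg u) => k.
elim: k u h => [|k IH] u h hk.
  case: (eqVneq u v) => [->|uv]; first by apply: rt_refl.
  case: (bruhat_next uv h) => u' [st h' lt]; have := Sg_le h'; lia.
case: (eqVneq u v) => [->|uv]; first by apply: rt_refl.
case: (bruhat_next uv h) => u' [st h' lt].
apply: (rt_trans _ _ _ u'); first exact: rt_step.
have := Sg_le h'; move=> hs; apply: (IH u' h'); lia.
Qed.


Definition pn w (k : nat) : nat := if (insub k : option 'I_N) is Some i then val (w i) else 0.

Lemma pnE w (i : 'I_N) : pn w i = w i.
Proof. by rewrite /pn valK. Qed.

Lemma pnE' w k (h : k < N) : pn w k = w (Ordinal h).
Proof. by rewrite /pn insubT. Qed.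

Lemma rk_nat w P Q : P <= N -> rk w P Q = \sum_(0 <= k < P) ((k < N) && (Q <= pn w k)).
Proof.
move=> PN; rewrite /rk.
rewrite (eq_bigr (fun k : 'I_N => ((k < P) && (Q <= pn w k) : nat))); last by move=> k _; rewrite pnE.
rewrite -(big_mkord xpredT (fun k => ((k < P) && (Q <= pn w k) : nat))).
rewrite (big_cat_nat (leq0n P) PN) /= (@sumb_false _ P N) ?addn0.
  by apply: eq_big_nat => k /andP [_ kP]; rewrite kP (leq_trans kP PN).
by move=> k /andP [Pk _]; rewrite ltnNge Pk.
Qed.

Lemma rk_val w P Q : Q <= N -> rk w P Q = \sum_(Q <= v < N) ((v < N) && (pn (w^-1)%g v < P)).
Proof.
move=> QN; rewrite /rk (reindex_inj (@perm_inj _ (w^-1)%g)) /=.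
rewrite (eq_bigr (fun k : 'I_N => ((Q <= k) && (pn (w^-1)%g k < P) : nat))); last first.
  by move=> k _; rewrite permKV pnE andbC.
rewrite -(big_mkord xpredT (fun k => ((Q <= k) && (pn (w^-1)%g k < P) : nat))).
rewrite (big_cat_nat (leq0n Q) QN) /= (@sumb_false _ 0 Q) ?add0n.
  by apply: eq_big_nat => k /andP [Qk kN]; rewrite Qk kN.
by move=> k /andP [_ kQ]; rewrite leqNgt kQ.
Qed.

Lemma rk_rowblock w P0 P1 P Q :
  (forall p q : 'I_N, P0 <= p -> p < q -> q < P1 -> w q < w p) ->
  P0 <= P -> P <= P1 -> P1 <= N ->
  rk w P Q = minn (rk w P0 Q + (P - P0)) (rk w P1 Q).
Proof.
move=> H h0 h1 h2.
have PN : P <= N by apply: leq_trans h2.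
have P0N : P0 <= N by apply: leq_trans PN.
rewrite !rk_nat // (big_cat_nat (leq0n P0) h0) (big_cat_nat (leq0n P0) (leq_trans h0 h1)) /=.
rewrite (@sumA1 _ P0 P1 P) //; first by lia.
move=> a b ha ab bP1 Fa; apply/negbTE/negP => /andP [bN Qb].
have aN : a < N by lia.
move: Fa; rewrite aN /= (pnE' _ aN) => /negbT/negP; apply.
rewrite (pnE' _ bN) in Qb.
apply: (leq_trans Qb); apply: ltnW; exact: (H (Ordinal aN) (Ordinal bN)).
Qed.

Lemma rk_colblock w Q0 Q1 P Q :
  (forall p q : 'I_N, p < q -> Q0 <= w p < Q1 -> Q0 <= w q < Q1 -> w q < w p) ->
  Q0 <= Q -> Q <= Q1 -> Q1 <= N ->
  rk w P Q = minn (rk w P Q1 + (Q1 - Q)) (rk w P Q0).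
Proof.
move=> H h0 h1 h2.
have QN : Q <= N by apply: leq_trans h2.
have Q0N : Q0 <= N by apply: leq_trans QN.
rewrite !rk_val // (big_cat_nat h1 h2) (big_cat_nat (leq_trans h0 h1) h2) /=.
rewrite (@sumA2 _ Q0 Q1 Q) //; first by lia.
move=> a b ha ab bQ1 /andP [aN Pa]; have bN : b < N by lia.
rewrite bN /=.
rewrite (pnE' _ aN) in Pa; rewrite (pnE' _ bN).
set pa := (w^-1)%g (Ordinal aN) in Pa *; set pb := (w^-1)%g (Ordinal bN).
have wpa : w pa = a :> nat by rewrite /pa permKV.
have wpb : w pb = b :> nat by rewrite /pb permKV.
case: (ltngtP pa pb) => h.
- have := H pa pb h; rewrite wpa wpb ha (ltn_trans ab bQ1) (leq_trans ha (ltnW ab)) bQ1.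
  by move=> /(_ isT isT); lia.
- exact: ltn_trans h Pa.
- have e : pa = pb by apply: val_inj.
  by move: wpa; rewrite e wpb; lia.
Qed.

End PermLemmas.



Lemma card_setE (T : finType) (P : pred T) : #|[set k | P k]| = \sum_(k : T) P k.
Proof.
rewrite -sum1_card big_mkcond; apply: eq_bigr => k _; rewrite inE; by case: (P k).
Qed.

Lemma fiber_inj (X Y : finType) (L : eqType) (f : X -> L) (g : Y -> L) :
  (forall l, #|[set x | f x == l]| = #|[set y | g y == l]|) ->
  exists h : X -> Y, injective h /\ forall x, g (h x) = f x.
Proof.
move=> hc.
case: (pickP (@predT Y)) => [y0 _|hY].
  pose A x := enum [set x' | f x' == f x].
  pose B x := enum [set y | g y == f x].
  pose h x := nth y0 (B x) (index x (A x)).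
  have hlt : forall x, index x (A x) < size (B x).
    move=> x; rewrite /B -cardE -hc cardE index_mem mem_enum inE //.
  have hB : forall x, h x \in B x by move=> x; exact: mem_nth.
  have hg : forall x, g (h x) = f x.
    by move=> x; have := hB x; rewrite mem_enum inE => /eqP.
  exists h; split => // x x' e.
  have fe : f x = f x' by rewrite -!hg e.
  have Ae : A x' = A x by rewrite /A fe.
  have Be : B x' = B x by rewrite /B fe.
  have ei : index x (A x) = index x' (A x).
    move: e; rewrite /h Ae Be => e.
    have u1 := hlt x; have u2 := hlt x'; rewrite Ae Be in u2.
    by apply/eqP; rewrite -(nth_uniq y0 u1 u2 (enum_uniq _)) e.
  have xA : x \in A x by rewrite mem_enum inE.
  have xA' : x' \in A x by rewrite mem_enum inE fe.
  by rewrite -(nth_index x xA) ei nth_index.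
have noX : X -> False.
  move=> x; have := hc (f x).
  have -> : #|[set y | g y == f x]| = 0.
    by apply/eqP; rewrite cards_eq0; apply/eqP/setP => y; rewrite !inE; have := hY y.
  by move/eqP; rewrite cards_eq0 => /eqP /setP /(_ x); rewrite !inE eqxx.
exists (fun x => False_rect _ (noX x)); split; first by move=> x; case: (noX x).
by move=> x; case: (noX x).
Qed.

Lemma sum_sub_le (I : finType) (P1 P2 : pred I) (F : I -> nat) :
  (forall i, P1 i -> P2 i) -> \sum_(i | P1 i) F i <= \sum_(i | P2 i) F i.
Proof.
move=> h; rewrite big_mkcond [X in _ <= X]big_mkcond; apply: leq_sum => i _.
by case h1: (P1 i); rewrite ?(h _ h1).
Qed.

Section Blocks.
Variables (n : nat) (d : 'I_n -> nat).
Local Notation N := (Dsum d).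

Definition pre (x : nat) := \sum_(i < n | i < x) d i.

Lemma pre0 : pre 0 = 0.
Proof. by apply: big_pred0 => i. Qed.

Lemma pre_n x : n <= x -> pre x = N.
Proof. by move=> h; apply: eq_bigl => i; rewrite (leq_trans (ltn_ord i) h). Qed.

Lemma pre_mono x y : x <= y -> pre x <= pre y.
Proof.
move=> h; apply: sum_sub_le => i ix; exact: leq_trans ix h.
Qed.

Lemma pre_succ (i : 'I_n) : pre i.+1 = pre i + d i.
Proof.
rewrite /pre (bigD1 i) ?ltnSn //= addnC; congr (_ + _).
by apply: eq_bigl => k; rewrite ltnS ltn_neqAle andbC.
Qed.

Lemma pre_le_N x : pre x <= N.
Proof. by rewrite -(pre_n (leqnn n)) /pre; apply: sum_sub_le => // i _; apply: ltn_ord. Qed.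

Lemma inBE (i : 'I_n) k : inB d i k = (pre i <= k < pre i.+1).
Proof.
rewrite /inB /pre; congr (_ && (k < _)).
Qed.

Lemma inB_uniq (i j : 'I_n) k : inB d i k -> inB d j k -> i = j.
Proof.
rewrite !inBE => /andP [h1 h2] /andP [h3 h4].
case: (ltngtP i j) => h.
- have := pre_mono h; lia.
- have := pre_mono h; lia.
- exact: val_inj.
Qed.

Lemma inB_ex k : k < N -> exists i : 'I_n, inB d i k.
Proof.
move=> kN.
have ex : exists x, k < pre x by exists n; rewrite pre_n.
case: (ex_minnP ex) => x kx xmin.
have x0 : 0 < x by move: kx; case: x {xmin} => //; rewrite pre0.
have xn : x <= n.
  by apply: xmin; rewrite pre_n.
have xn' : x.-1 < n by lia.
exists (Ordinal xn'); rewrite inBE /= prednK // kx andbT.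
by rewrite leqNgt; apply/negP => /xmin; lia.
Qed.

Lemma sum_inB (P : pred 'I_n) (b : 'I_n) k : inB d b k ->
  \sum_(i < n | P i) inB d i k = P b.
Proof.
move=> hb; rewrite big_mkcond (bigD1 b) //= hb big1 ?addn0; first by case: (P b).
move=> i ib; case: (P i) => //; apply/eqP; rewrite eqb0; apply/negP => hi.
by move: ib; rewrite (inB_uniq hi hb) eqxx.
Qed.

Lemma sum_inB_le (i : 'I_n) k : k < N -> \sum_(i' < n | i' <= i) inB d i' k = (k < pre i.+1).
Proof.
move=> kN; case: (inB_ex kN) => b hb; rewrite (sum_inB _ hb).
move: (hb); rewrite inBE => /andP [h1 h2].
case: (leqP b i) => h; first by rewrite (leq_trans h2) // pre_mono.
by have := pre_mono h; lia.
Qed.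

Lemma sum_inB_ge (j : 'I_n) k : k < N -> \sum_(j' < n | j <= j') inB d j' k = (pre j <= k).
Proof.
move=> kN; case: (inB_ex kN) => b hb; rewrite (sum_inB _ hb).
move: (hb); rewrite inBE => /andP [h1 h2].
case: (leqP j b) => h; first by rewrite (leq_trans _ h1) // pre_mono.
by have := pre_mono h; lia.
Qed.

Lemma psum_psi (w : {perm 'I_N}) (i j : 'I_n) :
  psum (psi w) i j = rk w (pre i.+1) (pre j).
Proof.
rewrite /psum /rk.
rewrite (eq_bigr (fun i' => \sum_(j' < n | j <= j') \sum_(k < N) (inB d i' k * inB d j' (w k)))); last first.
  move=> i' _; apply: eq_bigr => j' _; rewrite mxE card_setE.
  by apply: eq_bigr => k _; rewrite mulnb.
rewrite exchange_big /=.
rewrite (eq_bigr (fun j' => \sum_(k < N) \sum_(i' < n | i' <= i) (inB d i' k * inB d j' (w k)))); last first.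
  by move=> j' _; rewrite exchange_big.
rewrite exchange_big /=; apply: eq_bigr => k _.
rewrite (eq_bigr (fun j' => (\sum_(i' < n | i' <= i) inB d i' k) * inB d j' (w k))); last first.
  by move=> j' _; rewrite big_distrl.
by rewrite -big_distrr /= sum_inB_le // sum_inB_ge // mulnb.
Qed.


Lemma card_block (i : 'I_n) : #|[set k : 'I_N | inB d i k]| = d i.
Proof.
rewrite card_setE (eq_bigr (fun k : 'I_N => ((pre i <= k < pre i.+1) : nat))); last first.
  by move=> k _; rewrite inBE.
rewrite -(big_mkord xpredT (fun k => ((pre i <= k < pre i.+1) : nat))).
rewrite (big_cat_nat (leq0n (pre i)) (pre_le_N _)) /=.
rewrite (big_cat_nat (pre_mono (leqnSn i)) (pre_le_N _)) /=.
rewrite (@sumb_false _ 0 (pre i)); last by move=> k /andP [_ h]; rewrite leqNgt h.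
rewrite (@sumb_false _ (pre i.+1) N); last by move=> k /andP [h _]; rewrite ltnNge h andbF.
rewrite (@sumb_true _ (pre i) (pre i.+1)) ?pre_succ; first by lia.
by move=> k /andP [-> ->].
Qed.

Lemma same_block (i : 'I_n) p q : inB d i p -> inB d i q -> forall i', inB d i' p = inB d i' q.
Proof.
move=> hp hq i'; apply/idP/idP => h.
  by rewrite -(inB_uniq hp h).
by rewrite -(inB_uniq hq h).
Qed.

Lemma psi_swap_row (w : {perm 'I_N}) (p q : 'I_N) :
  (forall i, inB d i p = inB d i q) -> psi (tperm p q * w) = psi w.
Proof.
move=> h; apply/matrixP => i j; rewrite !mxE !card_setE.
rewrite (reindex_inj (@perm_inj _ (tperm p q))) /=.
apply: eq_bigr => k _; rewrite permM tpermK.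
by case: (tpermP p q k) => [->|->|//]; rewrite h.
Qed.

Lemma psi_swap_col (w : {perm 'I_N}) (p q : 'I_N) :
  (forall j, inB d j (w p) = inB d j (w q)) -> psi (tperm p q * w) = psi w.
Proof.
move=> h; apply/matrixP => i j; rewrite !mxE; apply: eq_card => k; rewrite !inE permM.
by case: (tpermP p q k) => [->|->|//]; rewrite h.
Qed.

Lemma longest_D (m : nmat n) (w : {perm 'I_N}) (p q : 'I_N) :
  longest_of m w -> p < q -> w p < w q ->
  (forall i, inB d i p = inB d i q) \/ (forall j, inB d j (w p) = inB d j (w q)) -> False.
Proof.
move=> [hw hmax] pq wpq hb.
have e : psi (tperm p q * w) = m.
  by case: hb => h; [rewrite psi_swap_row | rewrite psi_swap_col].
have := hmax _ e; have := length_tperm pq wpq; lia.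
Qed.

Lemma longest_row (m : nmat n) (w : {perm 'I_N}) (i : 'I_n) :
  longest_of m w ->
  forall p q : 'I_N, pre i <= p -> p < q -> q < pre i.+1 -> w q < w p.
Proof.
move=> hl p q h1 pq h2.
case: (ltngtP (w q) (w p)) => // h.
- exfalso; apply: (longest_D hl pq h); left; apply: (same_block (i := i)); rewrite inBE.
    by rewrite h1 (ltn_trans pq h2).
  by rewrite (leq_trans h1 (ltnW pq)) h2.
- have : w q = w p by apply: val_inj.
  by move/perm_inj => e; move: pq; rewrite e ltnn.
Qed.

Lemma longest_col (m : nmat n) (w : {perm 'I_N}) (j : 'I_n) :
  longest_of m w ->
  forall p q : 'I_N, p < q -> pre j <= w p < pre j.+1 -> pre j <= w q < pre j.+1 -> w q < w p.
Proof.
move=> hl p q pq h1 h2.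
case: (ltngtP (w q) (w p)) => // h.
- exfalso; apply: (longest_D hl pq h); right; apply: (same_block (i := j)); by rewrite inBE.
- have : w q = w p by apply: val_inj.
  by move/perm_inj => e; move: pq; rewrite e ltnn.
Qed.


Definition fpos (k : 'I_N) : option 'I_n := [pick i | inB d i k].

Lemma inB_fpos (i : 'I_n) (k : 'I_N) : inB d i k = (fpos k == Some i).
Proof.
rewrite /fpos; case: pickP => [b hb|h0].
  apply/idP/eqP => [h|[<-] //]; by rewrite (inB_uniq h hb).
case: (inB_ex (ltn_ord k)) => b hb; by move: (h0 b); rewrite hb.
Qed.

Lemma fpos_none (k : 'I_N) : fpos k != None.
Proof.
case: (inB_ex (ltn_ord k)) => b; rewrite inB_fpos => /eqP -> //.
Qed.

Section Surj.
Variable m : nmat n.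
Hypothesis hm : inMd d m.

Definition ZT := {t : 'I_n * 'I_n & 'I_(m t.1 t.2)}.

Lemma card_Z (P : pred ('I_n * 'I_n)) :
  #|[set z : ZT | P (tag z)]| = \sum_(t | P t) m t.1 t.2.
Proof.
rewrite card_setE.
transitivity (\sum_(z : ZT | P (tag z) && true) 1).
  by rewrite [RHS]big_mkcond; apply: eq_bigr => z _; rewrite andbT; case: (P (tag z)).
rewrite -(sig_big_dep (J := fun t : 'I_n * 'I_n => 'I_(m t.1 t.2)) P (fun _ _ => true) (fun _ _ => 1)).
by apply: eq_bigr => t _; rewrite sum1_card card_ord.
Qed.

Lemma card_Z_row (i : 'I_n) : #|[set z : ZT | Some (tag z).1 == Some i]| = d i.
Proof.
rewrite (card_Z (fun t => Some t.1 == Some i)).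
transitivity (\sum_(p : 'I_n * 'I_n | (p.1 == i) && true) m p.1 p.2).
  by apply: eq_bigl => p; rewrite andbT.
rewrite -(pair_big_dep (fun i' => i' == i) (fun _ _ => true) (fun a b => m a b)) big_pred1_eq.
by case: (hm i).
Qed.

Lemma card_Z_col (j : 'I_n) : #|[set z : ZT | Some (tag z).2 == Some j]| = d j.
Proof.
rewrite (card_Z (fun t => Some t.2 == Some j)).
transitivity (\sum_(p : 'I_n * 'I_n | true && (p.2 == j)) m p.1 p.2).
  by apply: eq_bigl => p.
rewrite -(pair_big_dep (fun _ => true) (fun _ j' => j' == j) (fun a b => m a b)).
rewrite (eq_bigr (fun i' => m i' j)); last by move=> i' _; rewrite big_pred1_eq.
by case: (hm j).
Qed.

Lemma card_Z_cell (i j : 'I_n) : #|[set z : ZT | ((tag z).1 == i) && ((tag z).2 == j)]| = m i j.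
Proof.
rewrite (card_Z (fun t => (t.1 == i) && (t.2 == j))).
rewrite -(pair_big_dep (fun i' => i' == i) (fun _ j' => j' == j) (fun a b => m a b)).
by rewrite big_pred1_eq big_pred1_eq.
Qed.

Lemma card_pos_lab (l : option 'I_n) :
  #|[set k : 'I_N | fpos k == l]| = #|[set z : ZT | Some (tag z).1 == l]|.
Proof.
case: l => [i|].
  rewrite card_Z_row -card_block; apply: eq_card => k; by rewrite !inE inB_fpos.
rewrite (eq_card (B := pred0)) ?card0; last by move=> k; rewrite !inE (negbTE (fpos_none k)).
by rewrite (eq_card (B := pred0)) ?card0 // => z; rewrite !inE.
Qed.

Lemma card_pos_labc (l : option 'I_n) :
  #|[set k : 'I_N | fpos k == l]| = #|[set z : ZT | Some (tag z).2 == l]|.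
Proof.
case: l => [i|].
  rewrite card_Z_col -card_block; apply: eq_card => k; by rewrite !inE inB_fpos.
rewrite (eq_card (B := pred0)) ?card0; last by move=> k; rewrite !inE (negbTE (fpos_none k)).
by rewrite (eq_card (B := pred0)) ?card0 // => z; rewrite !inE.
Qed.

Lemma psi_surj : exists w : {perm 'I_N}, psi w = m.
Proof.
have [h1 [inj1 sp1]] := @fiber_inj _ _ _ (fun k : 'I_N => fpos k) (fun z : ZT => Some (tag z).1) card_pos_lab.
have [h2 [inj2 sp2]] := @fiber_inj _ _ _ (fun k : 'I_N => fpos k) (fun z : ZT => Some (tag z).2) card_pos_labc.
have [h3 [inj3 _]] := @fiber_inj _ _ _ (fun z : ZT => Some (tag z).1) (fun k : 'I_N => fpos k)
   (fun l => esym (card_pos_lab l)).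
have cZ := leq_card h3 inj3.
have bij1 := inj_card_bij inj1 cZ.
have [h2i c1 c2] := inj_card_bij inj2 cZ.
have injw : injective (h2i \o h1).
  by apply: inj_comp => //; exact: can_inj c2.
exists (perm injw); apply/matrixP => i j; rewrite mxE.
rewrite (eq_card (B := [set k | ((tag (h1 k)).1 == i) && ((tag (h1 k)).2 == j)])); last first.
  move=> k; rewrite !inE permE /= !inB_fpos -sp1 -sp2 c2 //.
rewrite -card_Z_cell !card_setE.
by rewrite [RHS](reindex h1) //; exact: onW_bij.
Qed.

End Surj.

End Blocks.



Lemma seg_sum n (P : pred ('I_n * 'I_n)) (F : 'I_n * 'I_n -> nat) :
  (forall p, P p -> p.1 <= p.2) ->
  \sum_(s : seg n | P (val s)) F (val s) = \sum_(p | P p) F p.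
Proof.
move=> h.
rewrite (eq_bigl (fun p => (p \in [pred q : 'I_n * 'I_n | q.1 <= q.2]) && P p)); last first.
  by move=> p; rewrite inE; case hp: (P p); rewrite ?andbF ?andbT ?h.
rewrite big_sub_cond.
exact: erefl.
Qed.

Section Mat.
Variables (n : nat) (d : 'I_n -> nat).

Lemma psum_id (m : nmat n) : inMd d m -> forall i j : 'I_n,
  \sum_(i' < n | i' <= i) d i' +
  \sum_(i' < n | ~~ (i' <= i)) \sum_(j' < n | ~~ (j <= j')) m i' j' =
  psum m i j + \sum_(j' < n | ~~ (j <= j')) d j'.
Proof.
move=> hm i j.
have e1 : \sum_(i' < n | i' <= i) d i' =
  psum m i j + \sum_(i' < n | i' <= i) \sum_(j' < n | ~~ (j <= j')) m i' j'.
  rewrite /psum -big_split /=; apply: eq_bigr => i' _.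
  by case: (hm i') => <- _; rewrite (bigID (fun j' : 'I_n => j <= j')).
have e2 : \sum_(j' < n | ~~ (j <= j')) d j' =
  \sum_(i' < n | i' <= i) \sum_(j' < n | ~~ (j <= j')) m i' j' +
  \sum_(i' < n | ~~ (i' <= i)) \sum_(j' < n | ~~ (j <= j')) m i' j'.
  rewrite (eq_bigr (fun j' => \sum_(i' < n) m i' j')); last by move=> j' _; case: (hm j').
  by rewrite exchange_big /= (bigID (fun i' : 'I_n => i' <= i)) /=.
rewrite e1 e2; lia.
Qed.

Lemma M'_L (m : nmat n) : inM' d m -> forall i j : 'I_n, j <= i ->
  \sum_(i' < n | ~~ (i' <= i)) \sum_(j' < n | ~~ (j <= j')) m i' j' = 0.
Proof.
move=> [_ hz] i j ji; apply: big1 => i' hi; apply: big1 => j' hj.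
apply: hz; lia.
Qed.

Lemma sum_split_ji (i j : 'I_n) : j <= i ->
  \sum_(i' < n | i' <= i) d i' =
  \sum_(k < n | (j <= k) && (k <= i)) d k + \sum_(j' < n | ~~ (j <= j')) d j'.
Proof.
move=> ji; rewrite (bigID (fun k : 'I_n => j <= k)) /=; congr (_ + _).
  by apply: eq_bigl => k; rewrite andbC.
apply: eq_bigl => k; case: (leqP j k) => kj; rewrite ?andbF ?andbT //; exact: (leq_trans (ltnW kj) ji).
Qed.

Lemma part2 (m : nmat n) : inM' d m -> forall i j : 'I_n, j <= i ->
  psum m i j = \sum_(k < n | (j <= k) && (k <= i)) d k.
Proof.
move=> hm i j ji; have := psum_id hm.1 i j; rewrite (M'_L hm ji) (sum_split_ji ji); lia.
Qed.

Lemma part1_aux (m m' : nmat n) : inMd d m -> inM' d m' ->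
  (forall i j : 'I_n, psum m i j <= psum m' i j) -> inM' d m.
Proof.
move=> hm hm' hle; split => // r c hrc.
have hr := ltn_ord r; have hc := ltn_ord c.
have rn : r.-1 < n by lia.
have cn : c.+1 < n by lia.
pose i := Ordinal rn; pose j := Ordinal cn.
have ji : j <= i by rewrite /i /j /=; lia.
have h1 := psum_id hm i j.
have h2 := psum_id hm'.1 i j; rewrite (M'_L hm' ji) in h2.
have := hle i j.
have : m r c <= \sum_(i' < n | ~~ (i' <= i)) \sum_(j' < n | ~~ (j <= j')) m i' j'.
  rewrite (bigD1 r) /=; last by lia.
  rewrite (bigD1 c) /=; last by lia.
  lia.
lia.
Qed.

Lemma part4 (m : nmat n) : inM' d m -> forall i j : 'I_n, j.+1 = i -> m i j = psum m j i.
Proof.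
move=> hm i j e.
have hjj := part2 hm (leqnn j).
have dj : \sum_(k < n | (j <= k) && (k <= j)) d k = d j.
  rewrite (eq_bigl (fun k => k == j)) ?big_pred1_eq // => k.
  by rewrite -eqn_leq eq_sym.
rewrite dj in hjj.
have e1 : psum m j j = \sum_(i' < n | i' <= j) m i' j + psum m j i.
  rewrite /psum -big_split /=; apply: eq_bigr => i' _.
  rewrite (bigD1 j) //=; congr (_ + _); apply: eq_bigl => j'.
  by rewrite -e ltn_neqAle eq_sym andbC.
have e2 : d j = \sum_(i' < n | i' <= j) m i' j + m i j.
  case: (hm.1 j) => _ <-.
  rewrite (bigID (fun i' : 'I_n => i' <= j)) /=; congr (_ + _).
  rewrite (bigD1 i) /=; last by rewrite -e ltnn.
  rewrite big1 ?addn0 // => i' /andP [hi' ni'].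
  apply: hm.2; have h3 : (i' : nat) != i by []. move: hi' h3; rewrite -ltnNge; lia.
lia.
Qed.


Definition E (i j : 'I_n) (p : 'I_n * 'I_n) : bool :=
  if i <= j then (p.1 == i) && (p.2 == j) else (j.+1 == i) && (p.1 <= j) && (i <= p.2).

Lemma PhiE (x : mseg n) i j : Phi x i j = \sum_(s : seg n | E i j (val s)) x s.
Proof.
rewrite mxE /E; case: (leqP i j) => //= ij.
case: (j.+1 == i) => //=; by rewrite big_pred0.
Qed.

Lemma sum_ex (G : 'I_n -> seg n -> bool) (x : mseg n) :
  \sum_(j < n) \sum_(s : seg n | G j s) x s = \sum_(s : seg n) x s * \sum_(j < n) G j s.
Proof.
rewrite (eq_bigr (fun j => \sum_(s : seg n) (G j s * x s))); last first.
  by move=> j _; rewrite big_mkcond; apply: eq_bigr => s _; case: (G j s); rewrite ?mul1n.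
rewrite exchange_big /=; apply: eq_bigr => s _; rewrite big_distrr /=.
by apply: eq_bigr => j _; rewrite mulnC.
Qed.

Lemma count_uniq (P : pred 'I_n) :
  (forall j j', P j -> P j' -> j = j') -> \sum_(j < n) P j = [exists j, P j].
Proof.
move=> hu; case: (boolP [exists j, P j]) => [/existsP [j hj]|hn].
  rewrite (bigD1 j) //= hj big1 // => j' hj'.
  by case hP: (P j') => //; move: hj'; rewrite (hu _ _ hP hj) eqxx.
apply: big1 => j _; case hP: (P j) => //; by move: hn; rewrite negb_exists => /forallP /(_ j); rewrite hP.
Qed.

Lemma sum_cond (x : mseg n) (C : pred (seg n)) :
  \sum_(s : seg n) x s * C s = \sum_(s : seg n | C s) x s.
Proof. by rewrite [RHS]big_mkcond; apply: eq_bigr => s _; case: (C s); rewrite ?muln1 ?muln0. Qed.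

Lemma E_row (i : 'I_n) (p : 'I_n * 'I_n) : p.1 <= p.2 ->
  \sum_(j < n) E i j p = (p.1 <= i <= p.2).
Proof.
move=> hp; rewrite count_uniq.
  congr (nat_of_bool _); apply/existsP/idP.
    move=> [j]; rewrite /E; case: (leqP i j) => ij.
      by move=> /andP [/eqP -> /eqP ->]; rewrite leqnn.
    by move=> /andP [/andP [/eqP e h1] h2]; rewrite h2 andbT; lia.
  move=> /andP [h1 h2]; case: (ltngtP p.1 i) => h.
  - have hi : i.-1 < n by have := ltn_ord i; lia.
    exists (Ordinal hi); rewrite /E /=.
    have -> : (i <= i.-1) = false by lia.
    apply/andP; split; last by [].
    apply/andP; split; last by lia.
    apply/eqP; lia.
  - lia.
  - exists p.2; rewrite /E h2; apply/andP; split => //.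
    by apply/eqP/val_inj.
move=> j j'; rewrite /E; case: (leqP i j) => ij; case: (leqP i j') => ij'.
- by move=> /andP [_ /eqP <-] /andP [_ /eqP <-].
- by move=> /andP [/eqP e _] /andP [/andP [_ h] _]; move: h; rewrite e; lia.
- by move=> /andP [/andP [_ h] _] /andP [/eqP e _]; move: h; rewrite e; lia.
- move=> /andP [/andP [/eqP e _] _] /andP [/andP [/eqP e' _] _]; apply: val_inj => /=; lia.
Qed.

Lemma E_col (j : 'I_n) (p : 'I_n * 'I_n) : p.1 <= p.2 ->
  \sum_(i < n) E i j p = (p.1 <= j <= p.2).
Proof.
move=> hp; rewrite count_uniq.
  congr (nat_of_bool _); apply/existsP/idP.
    move=> [i]; rewrite /E; case: (leqP i j) => ij.
      by move=> /andP [/eqP -> /eqP ->]; rewrite leqnn ij.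
    by move=> /andP [/andP [/eqP e h1] h2]; rewrite h1 /=; lia.
  move=> /andP [h1 h2]; case: (ltngtP j p.2) => h.
  - have hi : j.+1 < n by have := ltn_ord p.2; lia.
    exists (Ordinal hi); rewrite /E /=.
    have -> : (j < j) = false by rewrite ltnn.
    rewrite eqxx h1 /=; exact: h.
  - lia.
  - exists p.1; rewrite /E h1 /= eqxx /=.
    by apply/eqP/val_inj.
move=> i i'; rewrite /E; case: (leqP i j) => ij; case: (leqP i' j) => ij'.
- by move=> /andP [/eqP <- _] /andP [/eqP <- _].
- by move=> /andP [_ /eqP e] /andP [/andP [/eqP e' _] h]; move: h; rewrite e; lia.
- by move=> /andP [/andP [/eqP e' _] h] /andP [_ /eqP e]; move: h; rewrite e; lia.
- move=> /andP [/andP [/eqP e _] _] /andP [/andP [/eqP e' _] _]; apply: val_inj => /=; lia.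
Qed.

Lemma part5a (x : mseg n) : inMseg d x -> inM' d (Phi x).
Proof.
move=> hx; split; last first.
  move=> i j h; rewrite mxE; case: (leqP i j) => ij; first lia.
  by have -> : (j.+1 == i) = false by apply/negbTE; lia.
move=> k; split.
  rewrite (eq_bigr (fun j => \sum_(s : seg n | E k j (val s)) x s)); last by move=> j _; rewrite PhiE.
  rewrite (sum_ex (fun j s => E k j (val s))).
  rewrite (eq_bigr (fun s : seg n => x s * ((val s).1 <= k <= (val s).2))); last first.
    by move=> s _; rewrite E_row //; exact: valP s.
  by rewrite sum_cond hx.
rewrite (eq_bigr (fun i => \sum_(s : seg n | E i k (val s)) x s)); last by move=> i _; rewrite PhiE.
rewrite (sum_ex (fun i s => E i k (val s))).
rewrite (eq_bigr (fun s : seg n => x s * ((val s).1 <= k <= (val s).2))); last first.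
  by move=> s _; rewrite E_col //; exact: valP s.
by rewrite sum_cond hx.
Qed.


Lemma Phi_diag (x : mseg n) (s : seg n) : Phi x (val s).1 (val s).2 = x s.
Proof.
rewrite PhiE /E (valP s) (eq_bigl (fun s' => s' == s)) ?big_pred1_eq //.
Qed.

Lemma part5b (x y : mseg n) : Phi x = Phi y -> x = y.
Proof. by move=> e; apply/ffunP => s; rewrite -!Phi_diag e. Qed.

Lemma part5c (m : nmat n) : inM' d m -> exists x : mseg n, inMseg d x /\ Phi x = m.
Proof.
move=> hm; exists [ffun s : seg n => m (val s).1 (val s).2]; split.
  move=> k.
  rewrite (eq_bigr (fun s : seg n => m (val s).1 (val s).2)); last by move=> s _; rewrite ffunE.
  rewrite (@seg_sum n (fun p => (p.1 <= k) && (k <= p.2)) (fun p => m p.1 p.2)); last first.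
    by move=> p /andP [h1 h2]; exact: leq_trans h1 h2.
  rewrite -(pair_big_dep (fun i' : 'I_n => i' <= k) (fun (_ : 'I_n) (j' : 'I_n) => k <= j') (fun a b : 'I_n => m a b)).
  rewrite -/(psum m k k) (part2 hm (leqnn k)).
  rewrite (eq_bigl (fun k' => k' == k)) ?big_pred1_eq // => k'.
  by rewrite -eqn_leq eq_sym.
apply/matrixP => i j; rewrite PhiE.
rewrite (eq_bigr (fun s : seg n => m (val s).1 (val s).2)); last by move=> s _; rewrite ffunE.
rewrite (@seg_sum n (E i j) (fun p => m p.1 p.2)); last first.
  move=> p; rewrite /E; case: (leqP i j) => ij.
    by move=> /andP [/eqP -> /eqP ->].
  move=> /andP [/andP [_ h1] h2]; lia.
rewrite /E; case: (leqP i j) => ij.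
  rewrite (eq_bigl (fun p => p == (i, j))) ?big_pred1_eq //.
case: eqP => e /=.
  rewrite -(pair_big_dep (fun i' : 'I_n => i' <= j) (fun (_ : 'I_n) (j' : 'I_n) => i <= j') (fun a b : 'I_n => m a b)).
  by rewrite -/(psum m j i) (part4 hm e).
rewrite big_pred0 // hm.2 //; lia.
Qed.

End Mat.



Section Main.
Variables (n : nat) (d : 'I_n -> nat).
Local Notation N := (Dsum d).

Lemma longest_ex (m : nmat n) : inMd d m -> exists w : {perm 'I_N}, longest_of m w.
Proof.
move=> hm; have [w0 hw0] := psi_surj hm.
have h0 : psi w0 == m by apply/eqP.
case: (@arg_maxnP _ w0 (fun w => psi w == m) (@perm_length N) h0) => w /eqP hw hmax.
exists w; split => // v hv; apply: hmax; exact/eqP.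
Qed.

Lemma leM_psum (m m' : nmat n) : leM d m m' -> forall i j, psum m i j <= psum m' i j.
Proof.
move=> [w [w' [[hw _] [[hw' _] hb]]]] i j.
rewrite -hw -hw' !psum_psi. exact: (rk_bruhat hb).
Qed.

Lemma corner (m m' : nmat n) (w w' : {perm 'I_N}) :
  inM' d m -> inM' d m' -> psi w = m -> psi w' = m' ->
  (forall i j : 'I_n, i < j -> psum m i j <= psum m' i j) ->
  forall x y, x <= n -> y <= n -> rk w (pre d x) (pre d y) <= rk w' (pre d x) (pre d y).
Proof.
move=> hm hm' hw hw' hle x y xn yn.
case: x xn => [|x] xn; first by rewrite pre0 !rk0.
case: (ltngtP y n) => yn'; last first.
- by rewrite yn' (pre_n d (leqnn n)) !rk_le_N.
- lia.
pose i := Ordinal xn; pose j := Ordinal yn'.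
have -> : x.+1 = i.+1 by [].
have -> : y = j by [].
rewrite -!psum_psi hw hw'.
case: (ltnP i j) => ij; first exact: hle.
by rewrite (part2 hm ij) (part2 hm' ij).
Qed.

Lemma rk_formula (m : nmat n) (w : {perm 'I_N}) (i j : 'I_n) P Q :
  longest_of m w ->
  pre d i <= P <= pre d i.+1 -> pre d j <= Q <= pre d j.+1 ->
  rk w P Q = minn (minn (rk w (pre d i) (pre d j.+1) + (pre d j.+1 - Q)) (rk w (pre d i) (pre d j))
                       + (P - pre d i))
                  (minn (rk w (pre d i.+1) (pre d j.+1) + (pre d j.+1 - Q)) (rk w (pre d i.+1) (pre d j))).
Proof.
move=> hl /andP [hP0 hP1] /andP [hQ0 hQ1].
rewrite (rk_rowblock Q (longest_row hl) hP0 hP1 (pre_le_N _ _)).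
rewrite (rk_colblock (pre d i) (longest_col (j := j) hl) hQ0 hQ1 (pre_le_N _ _)).
by rewrite (rk_colblock (pre d i.+1) (longest_col (j := j) hl) hQ0 hQ1 (pre_le_N _ _)).
Qed.

Lemma find_block P : 0 < n -> P <= N -> exists i : 'I_n, pre d i <= P <= pre d i.+1.
Proof.
move=> n0 PN; case: (ltngtP P N) => h.
- have [i hi] := inB_ex h; exists i; move: hi; rewrite inBE; lia.
- lia.
- have hn : n.-1 < n by lia.
  exists (Ordinal hn); rewrite /= prednK // (pre_n d (leqnn n)).
  have := pre_le_N d n.-1; lia.
Qed.

Lemma part3b (m m' : nmat n) : inM' d m -> inM' d m' ->
  (forall i j : 'I_n, i < j -> psum m i j <= psum m' i j) -> leM d m m'.
Proof.
move=> hm hm' hle.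
have [w hl] := longest_ex hm.1.
have [w' hl'] := longest_ex hm'.1.
exists w, w'; split => //; split => //.
apply: bruhat_of_rkle => P Q PN QN.
case: (posnP n) => n0.
  have N0 : N = 0 by apply: big1 => i _; have := ltn_ord i; lia.
  have -> : P = 0 by lia.
  by rewrite !rk0.
have [i hi] := find_block n0 PN.
have [j hj] := find_block n0 QN.
rewrite (rk_formula hl hi hj) (rk_formula hl' hi hj).
have C := corner hm hm' hl.1 hl'.1 hle.
have c1 := C i j.+1 (ltnW (ltn_ord i)) (ltn_ord j).
have c2 := C i j (ltnW (ltn_ord i)) (ltnW (ltn_ord j)).
have c3 := C i.+1 j.+1 (ltn_ord i) (ltn_ord j).
have c4 := C i.+1 j (ltn_ord i) (ltnW (ltn_ord j)).
lia.
Qed.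

End Main.

Theorem proposition3p1 (n : nat) (d : 'I_n -> nat) :
  (* (1) M' is a lower ideal of (M, <=) *)
  (forall m m' : nmat n, inMd d m -> inM' d m' -> leM d m m' -> inM' d m) /\
  (* (2) *)
  (forall m : nmat n, inM' d m ->
     forall i j : 'I_n, (j <= i)%N ->
       psum m i j = \sum_(k < n | (j <= k)%N && (k <= i)%N) d k) /\
  (* (3) *)
  (forall m m' : nmat n, inM' d m -> inM' d m' ->
     (leM d m m' <-> forall i j : 'I_n, (i < j)%N -> (psum m i j <= psum m' i j)%N)) /\
  (* (4) m_{i,i-1} = m_{<= i-1, >= i} for i in [2,n] *)
  (forall m : nmat n, inM' d m ->
     forall i j : 'I_n, j.+1 = i -> m i j = psum m j i) /\
  (* (5) Phi is a bijection M_{(d_i)} -> M'_{(d_i)} *)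
  ((forall x : mseg n, inMseg d x -> inM' d (Phi x)) /\
   (forall x y : mseg n, inMseg d x -> inMseg d y -> Phi x = Phi y -> x = y) /\
   (forall m : nmat n, inM' d m -> exists x : mseg n, inMseg d x /\ Phi x = m)).
Proof.
split.
  move=> m m' hm hm' hle; exact: (part1_aux hm hm' (leM_psum hle)).
split.
  move=> m hm i j ji; by rewrite (part2 hm ji).
split.
  move=> m m' hm hm'; split.
    by move=> h i j _; exact: leM_psum h i j.
  exact: part3b hm hm'.
split.
  move=> m hm i j e; by rewrite (part4 hm e).
split; first exact: part5a.
split; first by move=> x y _ _; exact: part5b.
exact: part5c.
Qed.
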